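(* Consider the two-armed Gaussian bandit with two candidate models described in the context, under disagreement $\phi(\nu)=1$, $\phi(\gamma)=2$, with $\Delta_1>0>\Delta_2$. Then the pairs $(1,\delta_\nu)$ and $(2,\delta_\gamma)$ are strict Berk–Nash equilibria: for each pair $(a^*,\mu^* )$, the action $a^*$ is the unique maximizer of $\sum_{\theta}\mu^*(\theta)\theta_a$ over $a\in\{1,2\}$, and $\mu^*$ assigns probability one to the unique minimizer over $\theta\in\{\nu,\gamma\}$ of $\mathrm{KL}\big(g(\cdot\mid a^* )\,\|\,f_\theta(\cdot\mid a^* )\big)$.
   Context: Actions are $\mathcal A=\{1,2\}$. True environment: $R\mid A=i\sim g(\cdot\mid i)=\mathcal N(g(i),1)$. Two candidate models $\nu=(\nu_1,\nu_2)$, $\gamma=(\gamma_1,\gamma_2)\in\mathbb R^2$; under model $\theta$, $R\mid A=i\sim f_\theta(\cdot\mid i)=\mathcal N(\theta_i,1)$; $\phi(\theta)=\arg\max_i\theta_i$ (assumed unique). $\Delta_i:=\mathbb E_{R\sim g(\cdot\mid i)}[\log f_\nu(R\mid i)-\log f_\gamma(R\mid i)]=\mathrm{KL}(g(\cdot\mid i)\|f_\gamma(\cdot\mid i))-\mathrm{KL}(g(\cdot\mid i)\|f_\nu(\cdot\mid i))$. $\delta_\theta$ denotes the point-mass belief on model $\theta$. *)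

(* Defs.v *)
From HB Require Import structures.
From mathcomp Require Import all_boot all_order all_algebra.
From mathcomp Require Import all_classical all_reals all_analysis.
Set Implicit Arguments. Unset Strict Implicit. Unset Printing Implicit Defensive.
Import Order.TTheory GRing.Theory Num.Theory.
Local Open Scope ring_scope.

Inductive action := A1 | A2.
Inductive model := Nu | Gamma.

Section Defs.
Context {R : realType}.

Definition KL (p q : R -> R) : \bar R :=
  (\int[@lebesgue_measure R]_x (p x * ln (p x / q x))%:E)%E.

Definition gauss (m : R) : R -> R := normal_pdf m 1.

(* KL( g(.|a) || f_theta(.|a) ), with g(.|a) = N(g a,1), f_theta(.|a) = N(theta a,1). *)
Definition KL_model (g theta : action -> R) (a : action) : \bar R :=
  KL (gauss (g a)) (gauss (theta a)).

Definition Delta (g nu gamma : action -> R) (i : action) : \bar R :=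
  (KL_model g gamma i - KL_model g nu i)%E.

Definition is_unique_argmax (f : action -> R) (a : action) : Prop :=
  forall b, b <> a -> f b < f a.

Definition param (nu gamma : action -> R) (th : model) : action -> R :=
  match th with Nu => nu | Gamma => gamma end.

Definition dirac_belief (th0 : model) : model -> R :=
  fun th => match th, th0 with
            | Nu, Nu => 1
            | Gamma, Gamma => 1
            | _, _ => 0
            end.

Definition belief_mean (nu gamma : action -> R) (mu : model -> R) (a : action) : R :=
  mu Nu * nu a + mu Gamma * gamma a.

Definition strict_BNE (g nu gamma : action -> R) (a : action) (mu : model -> R) : Prop :=
  is_unique_argmax (belief_mean nu gamma mu) a /\
  exists th0 : model,
    (forall th, th <> th0 ->
       (KL_model g (param nu gamma th0) a < KL_model g (param nu gamma th) a)%E)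
    /\ mu th0 = 1.

End Defs.

(* Main.v *)
Require Import Defs.
From mathcomp Require Import all_boot all_order all_algebra.
From mathcomp Require Import all_classical all_reals all_analysis.
From mathcomp Require Import measurable_realfun normal_distribution ring lra.
Import Order.TTheory GRing.Theory Num.Theory.
Local Open Scope ring_scope.

Section S.
Context {R : realType}.
Implicit Types m a x : R.

Let L m a x : R := ((x - a) ^+ 2 - (x - m) ^+ 2) / 2.
Let nf m x : R := expR (- (x - m) ^+ 2 / 2).

Lemma gaussE m x : gauss m x = normal_peak (1:R) * nf m x.
Proof.
rewrite /gauss /normal_pdf oner_eq0 /normal_fun /nf expr1n.
done.
Qed.

Lemma gauss_gt0 m x : 0 < gauss m x.
Proof. by rewrite gaussE mulr_gt0 ?expR_gt0 ?normal_peak_gt0 ?oner_eq0. Qed.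

Lemma ln_ratio m a x : ln (gauss m x / gauss a x) = L m a x.
Proof.
rewrite !gaussE invfM mulrACA divff ?gt_eqF ?normal_peak_gt0 ?oner_eq0 // mul1r.
rewrite /nf -expRN -expRD expRK /L; by field.
Qed.

Lemma pe_pos m a x : gauss m x * expR (L m a x) =
  expR ((m - a) ^+ 2) * gauss (2 * m - a) x.
Proof.
rewrite !gaussE mulrCA -mulrA; congr (_ * _).
rewrite /nf -!expRD; congr expR; rewrite /L; by field.
Qed.

Lemma pe_neg m a x : gauss m x * expR (- L m a x) = gauss a x.
Proof.
rewrite !gaussE -mulrA; congr (_ * _).
rewrite /nf -!expRD; congr expR; rewrite /L; by field.
Qed.
Local Open Scope ereal_scope.
Lemma absL_le (t : R) : (`|t| <= expR t + expR (- t))%R.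
Proof.
have h1 := expR_ge1Dx t; have h2 := expR_ge1Dx (- t).
have h3 := expR_gt0 t; have h4 := expR_gt0 (- t).
case: (lerP 0 t) => ht; [rewrite ger0_norm // | rewrite ltr0_norm //]; lra.
Qed.

Lemma KL_fin m a : KL (gauss m) (gauss a) \is a fin_num.
Proof.
rewrite /KL.
have -> : (fun x => (gauss m x * ln (gauss m x / gauss a x))%:E) =
          (fun x => (gauss m x * L m a x)%:E).
  by apply/funext => x; rewrite ln_ratio.
apply: integrable_fin_num => //.
pose G := (fun x : R => (expR ((m-a)^+2) * gauss (2 * m - a) x + gauss a x)%R%:E).
have iG : (@lebesgue_measure R).-integrable setT G.
  have -> : G = ((fun x => (expR ((m-a)^+2))%:E * (gauss (2 * m - a) x)%:E) \+ (fun x => (gauss a x)%:E)).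
    by apply/funext => x /=; rewrite /G EFinD EFinM.
  rewrite /gauss; apply: integrableD => //; first apply: integrableZl.
  + exact: measurableT.
  + exact: integrable_normal_pdf.
  + exact: integrable_normal_pdf.
apply: (le_integrable measurableT _ _ iG).
- apply: measurableT_comp => //; apply: measurable_funM; first exact: measurable_normal_pdf.
  rewrite /L; apply: measurable_funM => //; apply: measurable_funB;
    apply: measurable_funX; apply: measurable_funB => //.
- move=> x _; rewrite /G /=.
  rewrite lee_fin [X in (_ <= X)%R]ger0_norm; last first.
    by rewrite addr_ge0 ?mulr_ge0 ?expR_ge0 // ltW // gauss_gt0.
  rewrite normrM (gtr0_norm (gauss_gt0 _ _)) -pe_pos -(pe_neg m a x) -mulrDr.
  by rewrite ler_pM2l ?gauss_gt0 // absL_le.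
Qed.

Lemma subgt0 (x y : \bar R) : x \is a fin_num -> y \is a fin_num -> 0 < x - y -> y < x.
Proof.
move=> /fineK <- /fineK <-; rewrite -EFinB !lte_fin subr_gt0 //.
Qed.
Lemma sublt0 (x y : \bar R) : x \is a fin_num -> y \is a fin_num -> x - y < 0 -> x < y.
Proof.
move=> /fineK <- /fineK <-; rewrite -EFinB !lte_fin subr_lt0 //.
Qed.
End S.

Local Close Scope ereal_scope.

Theorem corollary1 (R : realType) (g nu gamma : action -> R)
  (hnu : is_unique_argmax nu A1) (hgamma : is_unique_argmax gamma A2)
  (hD1 : (0 < Delta g nu gamma A1)%E) (hD2 : (Delta g nu gamma A2 < 0)%E) :
  strict_BNE g nu gamma A1 (dirac_belief Nu) /\
  strict_BNE g nu gamma A2 (dirac_belief Gamma).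
Proof.
have fin : forall th i, KL_model g th i \is a fin_num.
  by move=> th i; exact: KL_fin.
split; split.
- move=> [] // _; rewrite /belief_mean /= !mul1r !mul0r !addr0.
  by apply: hnu.
- exists Nu; split => //; move=> [] // _ /=.
  exact: subgt0.
- move=> [] // _; rewrite /belief_mean /= !mul1r !mul0r !add0r.
  by apply: hgamma.
- exists Gamma; split => //; move=> [] // _ /=.
  exact: sublt0.
Qed.
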